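(* Let $\mathcal{M}=\{(x,y,z):x^2+y^2=1\}$ be the cylinder in $\mathbb{R}^3$ and let $G\to G'$ be a vertex-to-$K_4$ move. If $G$ is generically infinitesimally rigid on $\mathcal{M}$, then $G'$ is generically infinitesimally rigid on $\mathcal{M}$ (that is, the vertex-to-$K_4$ move on the cylinder preserves generic infinitesimal rigidity).
   Context: Vertex-to-$K_4$ move: replace a vertex $v$ of a simple graph by a copy of $K_4$ on four new vertices, each edge $xv$ being replaced by $xw$ for some arbitrarily chosen vertex $w$ of the $K_4$. For a framework $(G,p)$ on $\mathcal{M}$ ($p=(p_1,\dots,p_n)\in\mathcal{M}^n$), the rigidity matrix $R_{\mathcal{M}}(G,p)$ is the $(|E|+|V|)\times 3|V|$ matrix whose row for edge $v_iv_j$ has $p_i-p_j$ in the column triple of $v_i$ and $p_j-p_i$ in that of $v_j$, and whose row for vertex $v_i$ has the normal $N(p_i)=(2x_i,2y_i,0)$ in the triple of $v_i$; its kernel is the space of infinitesimal flexes. Rigid motion flexes are those induced by infinitesimal isometries of $\mathbb{R}^3$ tangential to $\mathcal{M}$ everywhere; $(G,p)$ is infinitesimally rigid if every infinitesimal flex is a rigid motion flex. $(G,p)$ is generic if any rational-coefficient polynomial in the coordinates vanishing at $p$ lies in the ideal generated by $X_i^2+Y_i^2-1$. A graph is generically infinitesimally rigid on $\mathcal{M}$ if its generic frameworks on $\mathcal{M}$ are infinitesimally rigid. *)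

(* Defs.v *)
From HB Require Import structures.
From mathcomp Require Import all_boot all_order all_algebra.
From mathcomp Require Import reals.
From mathcomp Require Import mpoly.

Set Implicit Arguments.
Unset Strict Implicit.
Unset Printing Implicit Defensive.

Import Order.TTheory GRing.Theory Num.Theory.
Local Open Scope ring_scope.

(* Points of R^3 are row vectors 'rV[R]_3; coordinates 0,1,2 are x,y,z. *)

Section Rigidity.
Variable R : realType.

Definition dot3 (a b : 'rV[R]_3) : R := \sum_(c < 3) a 0 c * b 0 c.

Definition on_cyl (a : 'rV[R]_3) : Prop := a 0 0 ^+ 2 + a 0 1 ^+ 2 = 1.

Definition cyl_normal (a : 'rV[R]_3) : 'rV[R]_3 :=
  \row_(c < 3) (if c == 0 then 2 * a 0 0 else if c == 1 then 2 * a 0 1 else 0).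

Variable V : finType.

(* u is in the kernel of the rigidity matrix R_M(G,p): the row of edge v_iv_j
   applied to u is (p_i - p_j).u_i + (p_j - p_i).u_j, and the row of vertex v_i
   applied to u is N(p_i).u_i. *)
Definition inf_flex (e : rel V) (p u : V -> 'rV[R]_3) : Prop :=
  (forall i j, e i j -> dot3 (p i - p j) (u i) + dot3 (p j - p i) (u j) = 0) /\
  (forall i, dot3 (cyl_normal (p i)) (u i) = 0).

(* infinitesimal isometries of R^3: x |-> x A + b with A skew-symmetric *)
Definition inf_isometry (A : 'M[R]_3) : Prop := A^T = - A.

Definition tangential_to_cyl (A : 'M[R]_3) (b : 'rV[R]_3) : Prop :=
  forall x : 'rV[R]_3, on_cyl x -> dot3 (cyl_normal x) (x *m A + b) = 0.

Definition rigid_motion_flex (p u : V -> 'rV[R]_3) : Prop :=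
  exists (A : 'M[R]_3) (b : 'rV[R]_3),
    [/\ inf_isometry A, tangential_to_cyl A b & forall i, u i = p i *m A + b].

Definition inf_rigid (e : rel V) (p : V -> 'rV[R]_3) : Prop :=
  forall u, inf_flex e p u -> rigid_motion_flex p u.

(* polynomial variables: coordinate c of vertex x is variable (x, c) *)
Definition var_idx (x : V) (c : 'I_3) : 'I_(#|V| * 3) :=
  mxvec_index (enum_rank x) c.

Definition coords (p : V -> 'rV[R]_3) : 'I_(#|V| * 3) -> R :=
  fun k => mxvec (\matrix_(i < #|V|, c < 3) p (enum_val i) 0 c) 0 k.

Definition in_cyl_ideal (f : {mpoly rat[#|V| * 3]}) : Prop :=
  exists q : V -> {mpoly rat[#|V| * 3]},
    f = \sum_(x : V) q x * ('X_(var_idx x 0) ^+ 2 + 'X_(var_idx x 1) ^+ 2 - 1).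

Definition generic (p : V -> 'rV[R]_3) : Prop :=
  forall f : {mpoly rat[#|V| * 3]},
    (map_mpoly (ratr : rat -> R) f).@[coords p] = 0 -> in_cyl_ideal f.

Definition framework_on_cyl (p : V -> 'rV[R]_3) : Prop := forall i, on_cyl (p i).

Definition gen_inf_rigid (e : rel V) : Prop :=
  forall p : V -> 'rV[R]_3, framework_on_cyl p -> generic p -> inf_rigid e p.

End Rigidity.

Definition simple_graph (V : finType) (e : rel V) : Prop :=
  (forall x y, e x y = e y x) /\ (forall x, e x x = false).

(* vertex-to-K4 move: v is replaced by four new vertices 'I_4 forming a K4;
   each edge x v (x <> v) becomes x (w x), w arbitrary. *)
Definition k4_vertex (V : finType) (v : V) := ({x : V | x != v} + 'I_4)%type.

Definition k4_move (V : finType) (e : rel V) (v : V)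
    (w : {x : V | x != v} -> 'I_4) : rel (k4_vertex v) :=
  fun a b =>
    match a, b with
    | inl x, inl y => e (val x) (val y)
    | inr i, inr j => i != j
    | inl x, inr i => e (val x) v && (w x == i)
    | inr i, inl x => e v (val x) && (w x == i)
    end.

(* Main.v *)
Require Import Defs.
From HB Require Import structures.
From mathcomp Require Import all_boot all_order all_algebra.
From mathcomp Require Import reals.
From mathcomp Require Import mpoly.
From mathcomp Require Import ring lra.

Set Implicit Arguments.
Unset Strict Implicit.
Unset Printing Implicit Defensive.
Import Order.TTheory GRing.Theory Num.Theory.
Local Open Scope ring_scope.


Section Gen.
Variable R : realType.

Definition ev N (z : 'I_N -> R) (f : {mpoly rat[N]}) : R := (map_mpoly (ratr : rat -> R) f).@[z].

Lemma evX N (z : 'I_N -> R) i : ev z 'X_i = z i.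
Proof. by rewrite /ev map_mpolyX mevalXU. Qed.

Lemma evC N (z : 'I_N -> R) c : ev z c%:MP = ratr c.
Proof. by rewrite /ev map_mpolyC mevalC. Qed.

Lemma evD N (z : 'I_N -> R) f g : ev z (f + g) = ev z f + ev z g.
Proof. by rewrite /ev !rmorphD. Qed.
Lemma evB N (z : 'I_N -> R) f g : ev z (f - g) = ev z f - ev z g.
Proof. by rewrite /ev !rmorphB. Qed.
Lemma evM N (z : 'I_N -> R) f g : ev z (f * g) = ev z f * ev z g.
Proof. by rewrite /ev !rmorphM. Qed.
Lemma ev1 N (z : 'I_N -> R) : ev z 1 = 1.
Proof. by rewrite /ev !rmorph1. Qed.
Lemma ev0 N (z : 'I_N -> R) : ev z 0 = 0.
Proof. by rewrite /ev !rmorph0. Qed.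
Lemma evn N (z : 'I_N -> R) k : ev z k%:R = k%:R.
Proof. by rewrite /ev !rmorph_nat. Qed.
Lemma evXn N (z : 'I_N -> R) f k : ev z (f ^+ k) = ev z f ^+ k.
Proof. by rewrite /ev !rmorphXn. Qed.
Lemma ev_sum N (z : 'I_N -> R) (I : finType) (F : I -> {mpoly rat[N]}) :
  ev z (\sum_i F i) = \sum_i ev z (F i).
Proof.
rewrite /ev (raddf_sum (map_mpoly (ratr : rat -> R))).
exact: (raddf_sum (meval z)).
Qed.

Lemma det_ev N (z : 'I_N -> R) k (M : 'M[{mpoly rat[N]}]_k) :
  \det (map_mx (ev z) M) = ev z (\det M).
Proof.
have -> : map_mx (ev z) M = map_mx (meval z) (map_mx (map_mpoly (ratr : rat -> R)) M).
  by apply/matrixP => i j; rewrite !mxE.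
by rewrite !det_map_mx.
Qed.

Lemma GEN N (I : {mpoly rat[N]} -> Prop) (z q : 'I_N -> R) r m
  (M : 'M[{mpoly rat[N]}]_(r, m)) :
  (forall f, I f -> ev z f = 0) -> (forall f, ev q f = 0 -> I f) ->
  (forall x : 'cV[R]_m, map_mx (ev z) M *m x = 0 -> x = 0) ->
  (forall x : 'cV[R]_m, map_mx (ev q) M *m x = 0 -> x = 0).
Proof.
move=> Iz gq injz x Mx.
have rf : row_full (map_mx (ev z) M).
  rewrite /row_full -mxrank_tr.
  have : row_free (map_mx (ev z) M)^T.
    apply: inj_row_free => y /(congr1 trmx); rewrite trmx_mul trmxK trmx0.
    by move/injz => /(congr1 trmx); rewrite trmxK trmx0.
  by [].
set g := fullrankfun rf.
have U := fullrowsub_unit rf.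
have Dz : ev z (\det (rowsub g M)) != 0.
  rewrite -det_ev.
  have -> : map_mx (ev z) (rowsub g M) = rowsub g (map_mx (ev z) M).
    by apply/matrixP => i j; rewrite !mxE.
  by rewrite -unitfE -unitmxE.
have Dq : ev q (\det (rowsub g M)) != 0.
  apply: contra Dz => /eqP /gq /Iz ->; by [].
have Uq : rowsub g (map_mx (ev q) M) \in unitmx.
  rewrite unitmxE unitfE.
  have -> : rowsub g (map_mx (ev q) M) = map_mx (ev q) (rowsub g M).
    by apply/matrixP => i j; rewrite !mxE.
  by rewrite det_ev.
have : rowsub g (map_mx (ev q) M) *m x = 0.
  by rewrite mul_rowsub_mx Mx; apply/matrixP => i j; rewrite !mxE.
by move/(congr1 (mulmx (invmx (rowsub g (map_mx (ev q) M))))); rewrite mulKmx // mulmx0.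
Qed.

Lemma sys_mx N (z : 'I_N -> R) (C Rw : finType) (F : Rw -> C -> {mpoly rat[N]}) (y : 'cV[R]_#|C|) i :
  (map_mx (ev z) (\matrix_(i < #|Rw|, j < #|C|) F (enum_val i) (enum_val j)) *m y) i 0 =
  \sum_c ev z (F (enum_val i) c) * y (enum_rank c) 0.
Proof.
rewrite mxE (big_enum_val (fun c => ev z (F (enum_val i) c) * y (enum_rank c) 0)) /=.
by apply: eq_bigr => j _; rewrite !mxE enum_valK.
Qed.

Lemma GENsys N (I : {mpoly rat[N]} -> Prop) (z q : 'I_N -> R) (C Rw : finType)
  (F : Rw -> C -> {mpoly rat[N]}) :
  (forall f, I f -> ev z f = 0) -> (forall f, ev q f = 0 -> I f) ->
  (forall x : C -> R, (forall r, \sum_c ev z (F r c) * x c = 0) -> forall c, x c = 0) ->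
  forall x : C -> R, (forall r, \sum_c ev q (F r c) * x c = 0) -> forall c, x c = 0.
Proof.
move=> Iz gq injz x hx c.
pose M := \matrix_(i < #|Rw|, j < #|C|) F (enum_val i) (enum_val j).
have H := @GEN N I z q _ _ M Iz gq.
have /H {}H : forall y : 'cV[R]_#|C|, map_mx (ev z) M *m y = 0 -> y = 0.
  move=> y hy; apply/matrixP => j k; rewrite (ord1 k) mxE.
  have := injz (fun c => y (enum_rank c) 0) _ (enum_val j); rewrite enum_valK; apply.
  move=> r; rewrite -(enum_rankK r) -sys_mx hy; by rewrite mxE.
have := H (\col_j x (enum_val j)).
have -> : map_mx (ev q) M *m \col_j x (enum_val j) = 0.
  apply/matrixP => i k; rewrite (ord1 k) sys_mx mxE -[RHS](hx (enum_val i)).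
  by apply: eq_bigr => c' _; rewrite mxE enum_rankK.
move/(_ erefl)/matrixP/(_ (enum_rank c) 0); by rewrite !mxE enum_rankK.
Qed.
End Gen.


Section Sys.
Variable R : realType.
Variable W : finType.
Local Notation N := (#|W| * 3)%N.
Local Notation mp := {mpoly rat[N]}.

Definition Xv (a : W) (c : 'I_3) : mp := 'X_(var_idx a c).

Lemma ev_Xv (p : W -> 'rV[R]_3) a c : ev (coords p) (Xv a c) = p a 0 c.
Proof. by rewrite /Xv evX /coords /var_idx mxvecE mxE enum_rankK. Qed.

Lemma ideal_vanish (p : W -> 'rV[R]_3) f :
  framework_on_cyl p -> @in_cyl_ideal W f -> ev (coords p) f = 0.
Proof.
move=> hp [h ->]; rewrite ev_sum big1 // => x _.
rewrite evM evB evD !evXn ev1.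
have := ev_Xv p x 0; rewrite /Xv => ->.
have := ev_Xv p x 1; rewrite /Xv => ->.
by rewrite (hp x) subrr mulr0.
Qed.

Variable K : finType.
Definition pk (a : K) (al : 'I_3 -> mp) (kc : K * 'I_3) : mp :=
  if kc.1 == a then al kc.2 else 0.

Lemma sum_pk (z : 'I_N -> R) a al (x : K * 'I_3 -> R) :
  \sum_kc ev z (pk a al kc) * x kc = \sum_c ev z (al c) * x (a, c).
Proof.
rewrite (_ : \sum_kc _ = \sum_k \sum_c ev z (pk a al (k, c)) * x (k, c)); last first.
  by rewrite pair_bigA; apply: congr_big => // -[k c].
rewrite (bigD1 a) //= [X in _ + X]big1 ?addr0.
  by apply: eq_bigr => c _; rewrite /pk /= eqxx.
by move=> k /negbTE kna; apply: big1 => c _; rewrite /pk /= kna ev0 mul0r.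
Qed.

Variables (iota : K -> W) (E : rel K) (P : K -> W -> bool) (Z : pred K).

Definition dif (i j : W) (c : 'I_3) : mp := Xv i c - Xv j c.
Definition nrm (i : W) (c : 'I_3) : mp :=
  if c == 0 then 2%:R * Xv i 0 else if c == 1 then 2%:R * Xv i 1 else 0.
Definition sel (c0 : 'I_3) (c : 'I_3) : mp := if c == c0 then 1 else 0.

Definition Row := (((K * K) + (K * W)) + (K + (K * 'I_3)))%type.

Definition sysF (r : Row) (kc : K * 'I_3) : mp :=
  match r with
  | inl (inl (a, b)) => if E a b then pk a (dif (iota a) (iota b)) kc + pk b (dif (iota b) (iota a)) kc else 0
  | inl (inr (a, t)) => if P a t then pk a (dif (iota a) t) kc else 0
  | inr (inl a) => pk a (nrm (iota a)) kc
  | inr (inr (a, c0)) => if Z a then pk a (sel c0) kc else 0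
  end.

Definition xv (x : K * 'I_3 -> R) (a : K) : 'rV[R]_3 := \row_c x (a, c).

Lemma sum_dif (p : W -> 'rV[R]_3) (x : K * 'I_3 -> R) a i j :
  \sum_c ev (coords p) (dif i j c) * x (a, c) = dot3 (p i - p j) (xv x a).
Proof. by apply: eq_bigr => c _; rewrite /dif evB !ev_Xv !mxE. Qed.

Lemma sum_nrm (p : W -> 'rV[R]_3) (x : K * 'I_3 -> R) a i :
  \sum_c ev (coords p) (nrm i c) * x (a, c) = dot3 (cyl_normal (p i)) (xv x a).
Proof.
apply: eq_bigr => c _; rewrite /nrm !mxE.
by case: ifP => _; [rewrite evM evn ev_Xv | case: ifP => _; [rewrite evM evn ev_Xv | rewrite ev0]].
Qed.

Lemma sum_sel (z : 'I_N -> R) (x : K * 'I_3 -> R) a c0 :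
  \sum_c ev z (sel c0 c) * x (a, c) = x (a, c0).
Proof.
rewrite (bigD1 c0) //= big1 ?addr0; first by rewrite /sel eqxx ev1 mul1r.
by move=> c /negbTE h; rewrite /sel h ev0 mul0r.
Qed.

Definition sys_conds (p : W -> 'rV[R]_3) (x : K * 'I_3 -> R) : Prop :=
  [/\ forall a b, E a b -> dot3 (p (iota a) - p (iota b)) (xv x a) + dot3 (p (iota b) - p (iota a)) (xv x b) = 0,
      forall a t, P a t -> dot3 (p (iota a) - p t) (xv x a) = 0,
      forall a, dot3 (cyl_normal (p (iota a))) (xv x a) = 0 &
      forall a c, Z a -> x (a, c) = 0].

Lemma sys_eval (p : W -> 'rV[R]_3) (x : K * 'I_3 -> R) :
  (forall r, \sum_kc ev (coords p) (sysF r kc) * x kc = 0) <-> sys_conds p x.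
Proof.
have e1 a b : \sum_kc ev (coords p) (pk a (dif (iota a) (iota b)) kc + pk b (dif (iota b) (iota a)) kc) * x kc =
   dot3 (p (iota a) - p (iota b)) (xv x a) + dot3 (p (iota b) - p (iota a)) (xv x b).
  rewrite -!sum_dif -!sum_pk -big_split /=; apply: eq_bigr => kc _; by rewrite evD mulrDl.
split.
  move=> h; split.
  - by move=> a b hE; rewrite -e1 -[RHS](h (inl (inl (a, b)))) /= hE.
  - by move=> a t hP; rewrite -sum_dif -sum_pk -[RHS](h (inl (inr (a, t)))) /= hP.
  - by move=> a; rewrite -sum_nrm -sum_pk -[RHS](h (inr (inl a))).
  - by move=> a c hZ; rewrite -(sum_sel (coords p)) -sum_pk -[RHS](h (inr (inr (a, c)))) /= hZ.
case=> h1 h2 h3 h4 [[[a b]|[a t]]|[a|[a c]]] /=.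
- case hE: (E a b); last by apply: big1 => kc _; rewrite ev0 mul0r.
  by rewrite e1 h1.
- case hP: (P a t); last by apply: big1 => kc _; rewrite ev0 mul0r.
  by rewrite sum_pk sum_dif h2.
- by rewrite sum_pk sum_nrm h3.
- case hZ: (Z a); last by apply: big1 => kc _; rewrite ev0 mul0r.
  by rewrite sum_pk sum_sel h4.
Qed.

End Sys.


Section Motions.
Variable R : realType.

Lemma sum3 (F : 'I_3 -> R) : \sum_i F i = F 0 + F 1 + F 2.
Proof. by rewrite !big_ord_recr big_ord0 /= add0r; congr (F _ + F _ + F _); apply: val_inj. Qed.

Lemma ord3 (i : 'I_3) : i = 0 \/ i = 1 \/ i = 2.
Proof.
case: i => [[|[|[|k]]] Hk]; [left|right;left|right;right|by []];
  by apply: val_inj.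
Qed.

Definition mk3 (a b c : R) : 'rV[R]_3 := \row_(i < 3) [:: a; b; c]`_i.
Lemma mk3E0 a b c : mk3 a b c 0 0 = a. Proof. by rewrite mxE. Qed.
Lemma mk3E1 a b c : mk3 a b c 0 1 = b. Proof. by rewrite mxE. Qed.
Lemma mk3E2 a b c : mk3 a b c 0 2 = c. Proof. by rewrite mxE. Qed.

Lemma dot3E (a b : 'rV[R]_3) : dot3 a b = a 0 0 * b 0 0 + a 0 1 * b 0 1 + a 0 2 * b 0 2.
Proof. by rewrite /dot3 sum3. Qed.

Lemma nrmE0 (a : 'rV[R]_3) : cyl_normal a 0 0 = 2 * a 0 0. Proof. by rewrite mxE. Qed.
Lemma nrmE1 (a : 'rV[R]_3) : cyl_normal a 0 1 = 2 * a 0 1. Proof. by rewrite mxE. Qed.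
Lemma nrmE2 (a : 'rV[R]_3) : cyl_normal a 0 2 = 0. Proof. by rewrite mxE. Qed.

Lemma mulE (x : 'rV[R]_3) (A : 'M[R]_3) j :
  (x *m A) 0 j = x 0 0 * A 0 j + x 0 1 * A 1 j + x 0 2 * A 2 j.
Proof. by rewrite mxE sum3. Qed.

Definition rotA (a : R) : 'M[R]_3 :=
  \matrix_(i < 3, j < 3) nth 0 (nth [::] [:: [:: 0; a; 0]; [:: -a; 0; 0]; [:: 0; 0; 0]] i) j.

Lemma rot_skew a : inf_isometry (rotA a).
Proof.
rewrite /inf_isometry; apply/matrixP => i j; rewrite !mxE.
by case: (ord3 i) => [->|[->|->]]; case: (ord3 j) => [->|[->|->]] /=; rewrite ?oppr0 ?opprK.
Qed.

Definition rmot (a b : R) (x : 'rV[R]_3) : 'rV[R]_3 := x *m rotA a + mk3 0 0 b.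

Lemma rmotE a b x : rmot a b x = mk3 (- a * x 0 1) (a * x 0 0) b.
Proof.
apply/matrixP => i j; rewrite (ord1 i).
case: (ord3 j) => [->|[->|->]];
  rewrite mxE mulE /mk3 !mxE /=; ring.
Qed.

Lemma rot_tangential a b : tangential_to_cyl (rotA a) (mk3 0 0 b).
Proof.
move=> x _; rewrite -/(rmot a b x) rmotE dot3E !nrmE0 !nrmE1 !nrmE2 mk3E0 mk3E1 mk3E2; ring.
Qed.

Lemma rot_flex (T : finType) (e : rel T) (p : T -> 'rV[R]_3) a b :
  inf_flex e p (fun i => rmot a b (p i)).
Proof.
split=> [i j _|i]; rewrite !rmotE !dot3E ?nrmE0 ?nrmE1 ?nrmE2 !mk3E0 !mk3E1 !mk3E2 ?mxE; ring.
Qed.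

Lemma tangent_decomp (P t : 'rV[R]_3) :
  on_cyl P -> dot3 (cyl_normal P) t = 0 ->
  t = rmot (- P 0 1 * t 0 0 + P 0 0 * t 0 1) (t 0 2) P.
Proof.
rewrite /on_cyl dot3E nrmE0 nrmE1 nrmE2 => hP ht.
rewrite rmotE; apply/matrixP => i j; rewrite (ord1 i).
have f1 : t 0 0 * (P 0 0 ^+ 2 + P 0 1 ^+ 2 - 1) = 0 by rewrite hP subrr mulr0.
have f2 : t 0 1 * (P 0 0 ^+ 2 + P 0 1 ^+ 2 - 1) = 0 by rewrite hP subrr mulr0.
have f3 : P 0 0 * (2 * P 0 0 * t 0 0 + 2 * P 0 1 * t 0 1 + 0 * t 0 2) = 0 by rewrite ht mulr0.
have f4 : P 0 1 * (2 * P 0 0 * t 0 0 + 2 * P 0 1 * t 0 1 + 0 * t 0 2) = 0 by rewrite ht mulr0.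
case: (ord3 j) => [->|[->|->]]; rewrite mxE /=; nra.
Qed.

Lemma rigid_zero (A : 'M[R]_3) (b P Q : 'rV[R]_3) :
  inf_isometry A -> tangential_to_cyl A b -> on_cyl P -> P *m A + b = 0 ->
  Q *m A + b = 0.
Proof.
move=> hA ht hP hPA.
have sk i j : A j i = - A i j by have := congr1 (fun M : 'M[R]_3 => M i j) (hA : A^T = - A); rewrite !mxE.
have t1 := ht (mk3 1 0 0) ltac:(by rewrite /on_cyl mk3E0 mk3E1; ring).
have t2 := ht (mk3 0 1 0) ltac:(by rewrite /on_cyl mk3E0 mk3E1; ring).
have t3 := ht (mk3 1 0 1) ltac:(by rewrite /on_cyl mk3E0 mk3E1; ring).
have t4 := ht (mk3 0 1 1) ltac:(by rewrite /on_cyl mk3E0 mk3E1; ring).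
move: t1 t2 t3 t4.
rewrite !dot3E !nrmE0 !nrmE1 !nrmE2 ![(_ + b) 0 _]mxE !mulE !mk3E0 !mk3E1 !mk3E2 => t1 t2 t3 t4.
have s00 := sk 0 0; have s11 := sk 1 1; have s22 := sk 2 2.
have s01 := sk 0 1; have s02 := sk 0 2; have s12 := sk 1 2.
have e0 := congr1 (fun M : 'rV[R]_3 => M 0 0) hPA; have e1 := congr1 (fun M : 'rV[R]_3 => M 0 1) hPA;
have e2 := congr1 (fun M : 'rV[R]_3 => M 0 2) hPA.
move: e0 e1 e2; rewrite /= !mxE !sum3 => e0 e1 e2.
rewrite /on_cyl in hP.
have a0 : A 0 0 = 0 by lra.
have a1 : A 1 1 = 0 by lra.
have a2 : A 2 2 = 0 by lra.
have b0 : b 0 0 = 0 by lra.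
have b1 : b 0 1 = 0 by lra.
have a20 : A 2 0 = 0 by lra.
have a21 : A 2 1 = 0 by lra.
have a02 : A 0 2 = 0 by lra.
have a12 : A 1 2 = 0 by lra.
rewrite a02 a12 a2 !mulr0 !add0r in e2.
rewrite s01 a0 a20 b0 !mulr0 addr0 !add0r in e0.
rewrite a1 a21 b1 !mulr0 !addr0 in e1.
have a01 : A 0 1 = 0.
  have h1 : A 0 1 * P 0 1 = 0 by lra.
  have h2 : A 0 1 * P 0 0 = 0 by lra.
  have : A 0 1 * (P 0 0 ^+ 2 + P 0 1 ^+ 2) = 0.
    by rewrite mulrDr !expr2 !mulrA h1 h2 !mul0r addr0.
  by rewrite hP mulr1.
apply/matrixP => i j; rewrite (ord1 i) !mxE sum3.
case: (ord3 j) => [->|[->|->]]; rewrite ?s01 ?a0 ?a1 ?a2 ?a01 ?a02 ?a12 ?a20 ?a21 ?b0 ?b1 ?e2; lra.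
Qed.

End Motions.


Lemma comp_comp (n k l : nat) (R : comNzRingType) (p : {mpoly R[n]})
  (lq : n.-tuple {mpoly R[k]}) (lr : k.-tuple {mpoly R[l]}) :
  (p \mPo lq) \mPo lr = p \mPo [tuple (tnth lq i \mPo lr) | i < n].
Proof.
have T c m : ((c *: 'X_[m]) \mPo lq) \mPo lr = (c *: 'X_[m]) \mPo [tuple (tnth lq i \mPo lr) | i < n].
  rewrite !comp_mpolyZ comp_mpolyX rmorph_prod comp_mpolyX; congr (_ *: _).
  by apply/eq_bigr => i _; rewrite rmorphXn tnth_mktuple.
rewrite [p]mpolyE (raddf_sum (comp_mpoly lq)) (raddf_sum (comp_mpoly lr)).
rewrite (raddf_sum (comp_mpoly _)); apply/eq_bigr => m _; exact: T.
Qed.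

Lemma Xcomp (n l : nat) (R : comNzRingType) (lr : n.-tuple {mpoly R[l]}) i :
  'X_i \mPo lr = tnth lr i.
Proof. by rewrite comp_mpolyXU (tnth_nth 0). Qed.

Section Transfer.
Variable R : realType.
Variables (V : finType) (v : V).
Local Notation V' := (k4_vertex v : finType).

Definition img (y : V) : V' := if insub y is Some a then inl a else inr 0.

Definition lq : (#|V| * 3).-tuple {mpoly rat[#|V'| * 3]} :=
  [tuple mxvec (\matrix_(i < #|V|, c < 3) Xv (img (enum_val i)) c) 0 k | k < (#|V| * 3)%N].

Definition back (a : V') (c : 'I_3) : {mpoly rat[#|V| * 3]} :=
  match a with
  | inl x => Xv (val x) c
  | inr i => if i == 0 then Xv v c else (if c == 0 then 1 else 0)
  end.

Definition lr : (#|V'| * 3).-tuple {mpoly rat[#|V| * 3]} :=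
  [tuple mxvec (\matrix_(i < #|V'|, c < 3) back (enum_val i) c) 0 k | k < (#|V'| * 3)%N].

Definition pp (q : V' -> 'rV[R]_3) (y : V) := q (img y).

Lemma ev_comp1 (q : V' -> 'rV[R]_3) f :
  ev (coords q) (f \mPo lq) = ev (coords (pp q)) f.
Proof.
rewrite /ev map_mpoly_comp; last exact: fmorph_inj.
rewrite comp_mpoly_meval; apply: meval_eq => k.
rewrite tnth_map tnth_mktuple.
case/mxvec_indexP: k => i c.
rewrite mxvecE mxE -/(ev (coords q) (Xv (img (enum_val i)) c)) ev_Xv.
by rewrite /coords mxvecE mxE.
Qed.

Lemma Xv_comp (a : V') c : Xv a c \mPo lr = back a c.
Proof. by rewrite /Xv Xcomp tnth_mktuple /var_idx mxvecE mxE enum_rankK. Qed.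

Lemma Xv_comp' (a : V') c : 'X_(var_idx a c) \mPo lr = back a c.
Proof. exact: Xv_comp. Qed.

Lemma lq_lr : [tuple (tnth lq i \mPo lr) | i < (#|V| * 3)%N] = [tuple 'X_i | i < (#|V| * 3)%N].
Proof.
apply: eq_from_tnth => k; rewrite !tnth_mktuple.
case/mxvec_indexP: k => i c.
rewrite mxvecE mxE Xv_comp /img.
case: insubP => [a hy ha|].
  by rewrite /= /Xv /var_idx ha enum_valK.
move=> /negPn/eqP hv.
have -> : i = enum_rank v by rewrite -hv enum_valK.
by rewrite /= /Xv /var_idx.
Qed.

Lemma comp_back f : (f \mPo lq) \mPo lr = f.
Proof. by rewrite comp_comp lq_lr comp_mpoly_id. Qed.

Lemma sum_sig (T : nmodType) (F : V -> T) :
  \sum_(y | y != v) F y = \sum_(x : {x : V | x != v}) F (val x).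
Proof.
rewrite (reindex_omap (val : {x : V | x != v} -> V) insub).
  by apply: eq_bigl => x; rewrite (valP x) valK eqxx.
by move=> i hi; rewrite insubT.
Qed.

Lemma gen_comp (p : {mpoly rat[#|V'| * 3]}) (a : V') :
  (p * ('X_(var_idx a 0) ^+ 2 + 'X_(var_idx a 1) ^+ 2 - 1)) \mPo lr =
  (p \mPo lr) * ((back a 0) ^+ 2 + (back a 1) ^+ 2 - 1).
Proof.
have hX c : (comp_mpoly lr : {rmorphism _ -> _}) ('X_(var_idx a c)) = back a c by exact: Xv_comp'.
by rewrite rmorphM rmorphB rmorphD !rmorphXn rmorph1 !hX.
Qed.

Lemma generic_transfer (q : V' -> 'rV[R]_3) :
  generic q -> generic (pp q).
Proof.
move=> gq f hf.
have := gq (f \mPo lq); rewrite -/(ev _ _) ev_comp1 => /(_ hf) [h hh].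
have E : f = \sum_a (h a \mPo lr) * ((back a 0) ^+ 2 + (back a 1) ^+ 2 - 1).
  rewrite -[f]comp_back hh (raddf_sum (comp_mpoly lr)).
  by apply: eq_bigr => a _; exact: gen_comp.
exists (fun y => h (img y) \mPo lr); rewrite {1}E big_sumType /=.
have -> : \sum_(i < 4) (h (inr i) \mPo lr) * (back (inr i) 0 ^+ 2 + back (inr i) 1 ^+ 2 - 1)
   = (h (inr 0) \mPo lr) * ('X_(var_idx v 0) ^+ 2 + 'X_(var_idx v 1) ^+ 2 - 1).
  rewrite (bigD1 0) //= big1 ?addr0 // => i hi.
  by rewrite /= (negbTE hi) /= expr0n /= addr0 expr1n subrr mulr0.
rewrite [RHS](bigD1 v) //= sum_sig addrC /img insubF ?eqxx //; congr (_ + _).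
by apply: eq_bigr => x _; rewrite valK.
Qed.

End Transfer.


Section K4.
Variable R : realType.

Definition o0 : 'I_4 := @Ordinal 4 0 isT.
Definition o1 : 'I_4 := @Ordinal 4 1 isT.
Definition o2 : 'I_4 := @Ordinal 4 2 isT.
Definition o3 : 'I_4 := @Ordinal 4 3 isT.

Lemma ord4 (i : 'I_4) : i = o0 \/ i = o1 \/ i = o2 \/ i = o3.
Proof.
case: i => [[|[|[|[|k]]]] Hk]; [left|right;left|right;right;left|right;right;right|by []];
  by apply: val_inj.
Qed.

Definition pts (i : 'I_4) : 'rV[R]_3 :=
  if val i == 0%N then mk3 1 0 0 else if val i == 1%N then mk3 0 1 0
  else if val i == 2%N then mk3 (-1) 0 1 else mk3 0 (-1) 3.

Lemma pts_cyl i : on_cyl (pts i).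
Proof.
rewrite /on_cyl /pts; case: (ord4 i) => [->|[->|[->|->]]] /=;
  rewrite mk3E0 mk3E1; ring.
Qed.

Lemma K4_conc (W : finType) (iota : 'I_4 -> W) (p : W -> 'rV[R]_3)
  (hp : forall i, p (iota i) = pts i) (x : 'I_4 * 'I_3 -> R) :
  sys_conds iota (fun a b => a != b) (fun _ _ => false) (fun k => k == o0) p x ->
  forall kc, x kc = 0.
Proof.
case=> h1 _ h3 h4.
have e01 := h1 o0 o1 isT. have e02 := h1 o0 o2 isT. have e03 := h1 o0 o3 isT.
have e12 := h1 o1 o2 isT. have e13 := h1 o1 o3 isT. have e23 := h1 o2 o3 isT.
have n1 := h3 o1. have n2 := h3 o2. have n3 := h3 o3.
have z0 := h4 o0 0 isT. have z1 := h4 o0 1 isT. have z2 := h4 o0 2 isT.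
move: e01 e02 e03 e12 e13 e23 n1 n2 n3.
rewrite !hp /pts /= !dot3E !nrmE0 !nrmE1 !nrmE2 !mxE /= => e01 e02 e03 e12 e13 e23 n1 n2 n3.
case=> k c; case: (ord4 k) => [->|[->|[->|->]]]; case: (ord3 c) => [->|[->|->]]; lra.
Qed.

End K4.

Section Main.
Variable R : realType.

Lemma dot3B (a b c : 'rV[R]_3) : dot3 a (b - c) = dot3 a b - dot3 a c.
Proof. rewrite !dot3E !mxE; ring. Qed.
Lemma dot30 (a : 'rV[R]_3) : dot3 a 0 = 0.
Proof. rewrite dot3E !mxE; ring. Qed.

Lemma xv_eq (K : finType) (x : K * 'I_3 -> R) (f : K -> 'rV[R]_3) :
  (forall a c, x (a, c) = f a 0 c) -> forall a, xv x a = f a.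
Proof. move=> h a; apply/matrixP => i j; by rewrite (ord1 i) mxE h. Qed.

Lemma o0E : o0 = 0. Proof. exact: val_inj. Qed.

Theorem main (V : finType) (e : rel V)
  (v : V) (w : {x : V | x != v} -> 'I_4) :
  simple_graph e ->
  gen_inf_rigid R e -> gen_inf_rigid R (k4_move e w).
Proof.
move=> [esym eirr] hG q hcyl hgen u [hfe hfn].
have [a0 [b0 hdec]] : exists a0 b0, u (inr 0) = rmot a0 b0 (q (inr 0)).
  by do 2 eexists; exact: tangent_decomp (hcyl _) (hfn (inr 0)).
pose u2 x := u x - rmot a0 b0 (q x).
have [f2e f2n] : inf_flex (k4_move e w) q u2.
  case: (rot_flex (k4_move e w) q a0 b0) => r1 r2.
  split => [i j hij|i]; rewrite /u2 !dot3B.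
    by have := hfe i j hij; have := r1 i j hij; lra.
  by have := hfn i; have := r2 i; lra.
have u20 : u2 (inr 0) = 0 by rewrite /u2 -hdec subrr.
pose pK : (k4_vertex v : finType) -> 'rV[R]_3 :=
  fun a => match a with inl _ => mk3 1 0 0 | inr i => pts R i end.
have pKc : framework_on_cyl pK.
  by case => [x|i] /=; [rewrite /on_cyl mk3E0 mk3E1; ring | exact: pts_cyl].
have K4z : forall x : 'I_4 * 'I_3 -> R,
    (forall r, \sum_kc ev (coords pK) (sysF inr (fun a b => a != b) (fun _ _ => false) (fun k => k == o0) r kc) * x kc = 0) ->
    forall kc, x kc = 0.
  by move=> x /sys_eval; apply: K4_conc.
have K4q := GENsys (fun f hf => ideal_vanish pKc hf) hgen K4z.
have u2K : forall k, u2 (inr k) = 0.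
  move=> k; apply/matrixP => i c; rewrite (ord1 i) [RHS]mxE.
  set X := fun kc : 'I_4 * 'I_3 => u2 (inr kc.1) 0 kc.2.
  have XV := @xv_eq _ X (fun k => u2 (inr k)) (fun _ _ => erefl).
  apply: (K4q X _ (k, c)); apply/sys_eval; split.
  - by move=> a b hab; rewrite !XV; exact: f2e (inr a) (inr b) hab.
  - by [].
  - by move=> a; rewrite XV; exact: f2n (inr a).
  - by move=> a c' /eqP ->; rewrite /X /= o0E u20 mxE.
pose pz : (k4_vertex v : finType) -> 'rV[R]_3 :=
  fun a => match a with inl x => q (inl x) | inr _ => q (inr 0) end.
have pzc : framework_on_cyl pz by case => [x|i]; exact: hcyl.
pose EE : rel {x : V | x != v} := fun a b => e (val a) (val b).
pose PP : {x : V | x != v} -> (k4_vertex v : finType) -> bool :=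
  fun a t => (t == inr (w a)) && e (val a) v.
have Gz : forall x : {x : V | x != v} * 'I_3 -> R,
    (forall r, \sum_kc ev (coords pz) (sysF inl EE PP pred0 r kc) * x kc = 0) ->
    forall kc, x kc = 0.
  move=> x /sys_eval [h1 h2 h3 _].
  pose p := pp q.
  have pc : framework_on_cyl p by move=> y; exact: hcyl.
  have pg : generic p := generic_transfer hgen.
  have pE : forall a, p (val a) = pz (inl a) by move=> a; rewrite /p /pp /img valK.
  have pV : p v = q (inr 0) by rewrite /p /pp /img insubF // eqxx.
  pose U y := if insub y is Some a then xv x a else 0.
  have fl : inf_flex e p U.
    split.
      move=> y1 y2 hy; rewrite /U.
      case: insubP => [a ha hya|hn1]; case: insubP => [b hb hyb|hn2].
      - by rewrite -hya -hyb !pE; apply: h1; rewrite /EE hya hyb.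
      - move/negPn/eqP: hn2 => hn2; rewrite dot30 addr0 -hya pE hn2 pV.
        apply: (h2 a (inr (w a))); rewrite /PP eqxx /= hya -hn2 //.
      - move/negPn/eqP: hn1 => hn1; rewrite dot30 add0r -hyb pE hn1 pV.
        apply: (h2 b (inr (w b))); rewrite /PP eqxx /= hyb -hn1 esym //.
      - move/negPn/eqP: hn1 => hn1; move/negPn/eqP: hn2 => hn2.
        by move: hy; rewrite hn1 hn2 eirr.
    move=> y; rewrite /U; case: insubP => [a ha <-|_]; last exact: dot30.
    by rewrite pE; exact: h3.
  have [A [b [hA hT hU]]] := hG p pc pg U fl.
  have pv : p v *m A + b = 0 by rewrite -hU /U insubF // eqxx.
  case=> a c.
  have := rigid_zero (p (val a)) hA hT (pc v) pv.
  by rewrite -hU /U valK => /matrixP/(_ 0 c); rewrite !mxE.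
have Gq := GENsys (fun f hf => ideal_vanish pzc hf) hgen Gz.
have u2S : forall a, u2 (inl a) = 0.
  move=> a; apply/matrixP => i c; rewrite (ord1 i) [RHS]mxE.
  set X := fun kc : {x : V | x != v} * 'I_3 => u2 (inl kc.1) 0 kc.2.
  have XV := @xv_eq _ X (fun k => u2 (inl k)) (fun _ _ => erefl).
  apply: (Gq X _ (a, c)); apply/sys_eval; split.
  - by move=> a' b hab; rewrite !XV; exact: f2e (inl a') (inl b) hab.
  - move=> a' t /andP [/eqP -> he]; rewrite XV.
    have := f2e (inl a') (inr (w a')) ltac:(by rewrite /= he eqxx).
    by rewrite u2K dot30 addr0.
  - by move=> a'; rewrite XV; exact: f2n (inl a').
  - by [].
exists (rotA a0), (mk3 0 0 b0); split; [exact: rot_skew | exact: rot_tangential |].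
move=> i; have : u2 i = 0 by case: i => [a|k]; [exact: u2S | exact: u2K].
by rewrite /u2 => /eqP; rewrite subr_eq0 => /eqP ->.
Qed.

End Main.


Theorem corollary5p3 (R : realType) (V : finType) (e : rel V)
  (v : V) (w : {x : V | x != v} -> 'I_4) :
  simple_graph e ->
  gen_inf_rigid R e -> gen_inf_rigid R (k4_move e w).
Proof. exact: main. Qed.
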